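(* Let $C$ be a commutative semigroup and let $I$ be an ideal of $C$ with $\mathrm{Sep}\, I\neq\emptyset$. Then $P_I$ is a congruence on $C$ such that $I$ and $\mathrm{Sep}\, I$ are $P_I$-classes of $C$, and the factor semigroup $S=C/P_I$ satisfies Condition $( * )$. Conversely, if $\alpha$ is a congruence on a commutative semigroup $C$ such that the factor semigroup $C/\alpha$ satisfies Condition $( * )$, then there is an ideal $I$ of $C$ such that $\alpha=P_I$.
   Context: For a semigroup $S$ and a subset $A\subseteq S$, the idealizer of $A$ is $\mathrm{Id}\,A=\{x\in S: xA\subseteq A,\ Ax\subseteq A\}$ (so $\mathrm{Id}\,\emptyset=S$), and the separator of $A$ is $\mathrm{Sep}\,A=\mathrm{Id}\,A\cap \mathrm{Id}(S\setminus A)$. For $H\subseteq S$ and $a\in S$, let $H\dots a=\{(x,y)\in S\times S: xay\in H\}$ (here $x,y$ range over $S$), and let $P_H=\{(a,b)\in S\times S: H\dots a=H\dots b\}$, the principal congruence on $S$ defined by $H$. For a commutative semigroup $S$ with zero $0$ and $s\in S$, the annihilator is $A(s)=\{x\in S: xs=0\}$. A semigroup $S$ satisfies Condition $( * )$ if: (1) $S$ is a commutative monoid with a zero; (2) for every non-identity element $s$ of $S$, $A(s)\neq\{0\}$; (3) for all $s,t\in S$, $A(s)=A(t)$ implies $s=t$. (A one-element semigroup satisfies Condition $( * )$.) *)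

(* Defs.v *)
(* A semigroup is given by a carrier type T and an operation op : T -> T -> T
   (associativity / commutativity appear as explicit hypotheses). *)

Definition associative {T : Type} (op : T -> T -> T) : Prop :=
  forall a b c, op a (op b c) = op (op a b) c.

Definition commutative {T : Type} (op : T -> T -> T) : Prop :=
  forall a b, op a b = op b a.

Definition is_ideal {T : Type} (op : T -> T -> T) (I : T -> Prop) : Prop :=
  (exists a, I a) /\
  (forall s a, I a -> I (op s a)) /\
  (forall s a, I a -> I (op a s)).

Definition Idz {T : Type} (op : T -> T -> T) (A : T -> Prop) : T -> Prop :=
  fun x => (forall a, A a -> A (op x a)) /\ (forall a, A a -> A (op a x)).

Definition Sep {T : Type} (op : T -> T -> T) (A : T -> Prop) : T -> Prop :=
  fun x => Idz op A x /\ Idz op (fun y => ~ A y) x.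

(* H..a = { (x,y) in S x S : x a y in H } *)
Definition dots {T : Type} (op : T -> T -> T) (H : T -> Prop) (a : T)
  : T -> T -> Prop :=
  fun x y => H (op (op x a) y).

Definition P {T : Type} (op : T -> T -> T) (H : T -> Prop) : T -> T -> Prop :=
  fun a b => forall x y, dots op H a x y <-> dots op H b x y.

Definition congruence {T : Type} (op : T -> T -> T) (R : T -> T -> Prop)
  : Prop :=
  (forall a, R a a) /\
  (forall a b, R a b -> R b a) /\
  (forall a b c, R a b -> R b c -> R a c) /\
  (forall a b c, R a b -> R (op c a) (op c b) /\ R (op a c) (op b c)).

Definition is_class {T : Type} (R : T -> T -> Prop) (A : T -> Prop) : Prop :=
  exists a, A a /\ forall b, A b <-> R a b.

(* Condition ( * ) for the semigroup with carrier T, operation op, where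
   equality of elements is the relation eqv.  For the factor semigroup
   C / alpha (alpha a congruence), the elements are the classes [a],
   [a][b] = [ab] and [a] = [b] iff alpha a b; so "C/alpha satisfies
   Condition ( * )" is  cond_star alpha op.
   (1) commutative monoid with a zero; (2) A(s) <> {0} for s <> e;
   (3) A(s) = A(t) implies s = t, where A(s) = { x : x s = 0 }. *)
Definition cond_star {T : Type} (eqv : T -> T -> Prop) (op : T -> T -> T)
  : Prop :=
  (forall a b c, eqv (op a (op b c)) (op (op a b) c)) /\
  (forall a b, eqv (op a b) (op b a)) /\
  exists e z : T,
    (forall a, eqv (op e a) a /\ eqv (op a e) a) /\
    (forall a, eqv (op z a) z /\ eqv (op a z) z) /\
    (forall s, ~ eqv s e ->
       ~ (forall x, eqv (op x s) z <-> eqv x z)) /\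
    (forall s t, (forall x, eqv (op x s) z <-> eqv (op x t) z) -> eqv s t).

Definition factor_cond_star {T : Type} (op : T -> T -> T)
  (alpha : T -> T -> Prop) : Prop := cond_star alpha op.

(* Main.v *)
Require Import Defs.
From Stdlib Require Import Classical Setoid.

Lemma sep_iff {C} (op : C -> C -> C) (I : C -> Prop) s :
  Sep op I s -> forall z, I (op s z) <-> I z.
Proof.
  intros Hs z; split; intro h.
  - apply NNPP; intro nz; exact (proj1 (proj2 Hs) z nz h).
  - exact (proj1 (proj1 Hs) z h).
Qed.

Lemma sepP {C} (op : C -> C -> C) (I : C -> Prop) s :
  associative op -> commutative op ->
  Sep op I s -> forall x y, I (op (op x s) y) <-> I (op x y).
Proof.
  intros A Cm Hs x y. rewrite (Cm x s), <- A. apply sep_iff; auto.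
Qed.

Lemma Prefl {C} (op : C -> C -> C) I a : P op I a a.
Proof. intros x y; tauto. Qed.

Lemma Psym {C} (op : C -> C -> C) I a b : P op I a b -> P op I b a.
Proof. intros H x y; destruct (H x y); tauto. Qed.

Lemma Ptrans {C} (op : C -> C -> C) I a b c :
  P op I a b -> P op I b c -> P op I a c.
Proof. intros H1 H2 x y; destruct (H1 x y); destruct (H2 x y); tauto. Qed.

Lemma ideal_mid {C} (op : C -> C -> C) I :
  is_ideal op I -> forall x b y, I b -> I (op (op x b) y).
Proof.
  intros [_ [L R]] x b y h. apply R, L, h.
Qed.

Lemma classI {C} (op : C -> C -> C) (I : C -> Prop) :
  associative op -> commutative op -> is_ideal op I ->
  (exists x, Sep op I x) ->
  forall a, I a -> forall b, I b <-> P op I a b.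
Proof.
  intros A Cm HI [s Hs] a Ha b; split.
  - intros Hb x y; unfold dots; split; intros _; [exact (ideal_mid op I HI x b y Hb)|exact (ideal_mid op I HI x a y Ha)].
  - intros H. apply NNPP; intro nb.
    pose proof (proj1 (H s s) (ideal_mid op I HI s a s Ha)) as h.
    unfold dots in h. rewrite (Cm (op s b) s) in h.
    exact (nb (proj1 (sep_iff op I s Hs _) (proj1 (sep_iff op I s Hs _) h))).
Qed.

Lemma classSep {C} (op : C -> C -> C) (I : C -> Prop) :
  associative op -> commutative op -> is_ideal op I ->
  forall s0, Sep op I s0 -> forall b, Sep op I b <-> P op I s0 b.
Proof.
  intros A Cm HI s0 Hs b; split.
  - intros Hb x y; unfold dots.
    rewrite (sepP op I s0 A Cm Hs), (sepP op I b A Cm Hb). tauto.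
  - intros H.
    assert (Hb : forall x y, I (op (op x b) y) <-> I (op x y)).
    { intros x y. destruct (H x y). pose proof (sepP op I s0 A Cm Hs x y). unfold dots in *. tauto. }
    destruct HI as [HI0 [L R]].
    assert (K : forall a, ~ I a -> I (op b a) -> False).
    { intros a na h.
      assert (h1 : I (op (op s0 b) (op a s0))).
      { assert (E : op (op s0 b) (op a s0) = op (op s0 (op b a)) s0)
          by (rewrite !A; reflexivity).
        rewrite E. apply R, L, h. }
      apply (proj1 (Hb s0 (op a s0))) in h1. rewrite (Cm a s0) in h1.
      exact (na (proj1 (sep_iff op I s0 Hs _) (proj1 (sep_iff op I s0 Hs _) h1))). }
    split; split.
    + intros a h; apply L, h.
    + intros a h; apply R, h.
    + intros a na h; exact (K a na h).
    + intros a na h; rewrite Cm in h; exact (K a na h).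
Qed.

Theorem theorem1 :
  (forall (C : Type) (op : C -> C -> C),
     associative op -> commutative op ->
     forall I : C -> Prop,
       is_ideal op I ->
       (exists x, Sep op I x) ->
       congruence op (P op I) /\
       is_class (P op I) I /\
       is_class (P op I) (Sep op I) /\
       factor_cond_star op (P op I)) /\
  (forall (C : Type) (op : C -> C -> C),
     associative op -> commutative op ->
     forall alpha : C -> C -> Prop,
       congruence op alpha ->
       factor_cond_star op alpha ->
       exists I : C -> Prop,
         is_ideal op I /\ (forall a b, alpha a b <-> P op I a b)).
Proof.
  split.
  - intros C op A Cm I HI HS.
    pose proof HS as [s0 Hs0].
    pose proof HI as [[a0 Ha0] [L R]].
    pose proof (classI op I A Cm HI HS a0 Ha0) as CI.
    pose proof (classSep op I A Cm HI s0 Hs0) as CS.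
    split; [|split; [|split]].
    + split; [exact (Prefl op I)|split; [exact (Psym op I)|split; [exact (Ptrans op I)|]]].
      intros a b c H; split; intros x y; unfold dots.
      * rewrite !(A x c). exact (H (op x c) y).
      * assert (E : forall u, op (op x (op u c)) y = op (op x u) (op c y))
          by (intro u; rewrite !A; reflexivity).
        rewrite !E. exact (H x (op c y)).
    + exists a0; split; auto.
    + exists s0; split; auto.
    + split; [|split].
      * intros a b c; rewrite A; apply Prefl.
      * intros a b; rewrite Cm; apply Prefl.
      * exists s0, a0.
        assert (Id : forall a, P op I (op s0 a) a).
        { intros a x y; unfold dots.
          rewrite (A x s0 a), (Cm x s0), <- (A s0 x a), <- (A s0 (op x a) y).
          apply sep_iff; auto. }
        assert (G0 : forall w, P op I w a0 <-> I w).
        { intro w; split; intro h.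
          - apply CI, Psym, h.
          - apply Psym, CI, h. }
        split; [|split; [|split]].
        -- intro a; split; [apply Id|rewrite Cm; apply Id].
        -- intro a; split; apply G0; [apply R|apply L]; exact Ha0.
        -- intros t nt H. apply nt. apply Psym, CS.
           assert (G : forall x, I (op x t) <-> I x).
           { intro x. rewrite <- (G0 (op x t)), <- (G0 x). apply H. }
           split; split.
           ++ intros a h; apply L, h.
           ++ intros a h; apply R, h.
           ++ intros a na h; rewrite Cm in h; exact (na (proj1 (G a) h)).
           ++ intros a na h; exact (na (proj1 (G a) h)).
        -- intros u v H x y; unfold dots.
           assert (E : forall w, op (op x w) y = op (op y x) w)
             by (intro w; rewrite (Cm (op x w) y); apply A).
           rewrite !E. rewrite <- (G0 (op (op y x) u)), <- (G0 (op (op y x) v)).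
           apply H.
  - intros C op A Cm alpha [Rr [Rs [Rt Rc]]] [_ [_ [e [z [He [Hz [_ H3]]]]]]].
    exists (fun w => alpha w z).
    assert (T : forall u v, alpha u v -> (alpha u z <-> alpha v z)).
    { intros u v h; split; intro h'; eauto. }
    split.
    + split; [exists z; apply Rr|split].
      * intros s a h. eapply Rt; [exact (proj1 (Rc _ _ s h))|exact (proj2 (Hz s))].
      * intros s a h. eapply Rt; [exact (proj2 (Rc _ _ s h))|exact (proj1 (Hz s))].
    + intros a b; split.
      * intros H x y; unfold dots. apply T.
        apply (proj2 (Rc _ _ y (proj1 (Rc _ _ x H)))).
      * intros H. apply H3. intro x.
        rewrite <- (T _ _ (proj2 (He (op x a)))), <- (T _ _ (proj2 (He (op x b)))).
        apply H.
Qed.
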